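(* Let $A$ be a real $3\times3$ matrix whose eigenvalues are $\lambda_1$ (with algebraic multiplicity $2$) and $\lambda_2\neq\lambda_1$, and let $h>0$. If $\lambda_1=0$, set $\psi=1$, $\phi=h$, $\theta=\dfrac{e^{\lambda_2h}-\lambda_2h-1}{h^2\lambda_2^2}$. If $\lambda_1\neq0$, set $$\phi=\frac{(\lambda_2^2h-\lambda_1^2h+2\lambda_1)e^{\lambda_1h}-2\lambda_1e^{\lambda_2h}}{(\lambda_1-\lambda_2)^2},\qquad \psi=\frac{(2-\lambda_1h)e^{\lambda_1h}-\lambda_1\phi}{2},\qquad \theta=\frac{he^{\lambda_1h}-\phi}{2\lambda_1\phi^2}.$$ Then (whenever these expressions are defined) the explicit difference scheme $$\frac{\mathbf{x}_{k+1}-\psi\mathbf{x}_k}{\phi}=A\mathbf{x}_k+\theta\phi A^2\mathbf{x}_k$$ is exact for the system $\mathbf{x}'=A\mathbf{x}$.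
   Context: A one-step difference scheme with step size $h>0$ for $\mathbf{x}'=M\mathbf{x}$ is called exact if for every initial vector $\mathbf{x}_0$ the sequence $(\mathbf{x}_k)$ it generates satisfies $\mathbf{x}_k=\mathbf{x}(kh)$ for all $k\ge 0$, where $\mathbf{x}(t)$ solves $\mathbf{x}'=M\mathbf{x}$, $\mathbf{x}(0)=\mathbf{x}_0$. *)

(* Defs.v *)
From HB Require Import structures.
From mathcomp Require Import all_boot all_order all_algebra.
From mathcomp Require Import all_classical all_reals all_analysis.
Set Implicit Arguments. Unset Strict Implicit. Unset Printing Implicit Defensive.
Import Order.TTheory GRing.Theory Num.Theory.
Import numFieldNormedType.Exports.
Local Open Scope ring_scope.

Definition ode_solution (R : realType) (n : nat) (M : 'M[R]_n.+1)
  (x0 : 'cV[R]_n.+1) (x : R -> 'cV[R]_n.+1) : Prop :=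
  x 0 = x0 /\
  forall t : R, derivable x t 1 /\ 'D_1 x t = M *m x t.

Definition scheme_exact (R : realType) (n : nat) (M : 'M[R]_n.+1)
  (h psi phi theta : R) : Prop :=
  forall (x0 : 'cV[R]_n.+1) (xs : nat -> 'cV[R]_n.+1),
    xs 0%N = x0 ->
    (forall k : nat,
       phi^-1 *: (xs k.+1 - psi *: xs k)
       = M *m xs k + (theta * phi) *: ((M ^+ 2) *m xs k)) ->
    forall x : R -> 'cV[R]_n.+1, ode_solution M x0 x ->
    forall k : nat, xs k = x (k%:R * h).

Definition phi_par (R : realType) (l1 l2 h : R) : R :=
  if l1 == 0 then h else
  ((l2 ^+ 2 * h - l1 ^+ 2 * h + 2 * l1) * expR (l1 * h)
     - 2 * l1 * expR (l2 * h)) / (l1 - l2) ^+ 2.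

Definition psi_par (R : realType) (l1 l2 h : R) : R :=
  if l1 == 0 then 1 else
  ((2 - l1 * h) * expR (l1 * h) - l1 * phi_par l1 l2 h) / 2.

Definition theta_par (R : realType) (l1 l2 h : R) : R :=
  if l1 == 0 then (expR (l2 * h) - l2 * h - 1) / (h ^+ 2 * l2 ^+ 2) else
  (h * expR (l1 * h) - phi_par l1 l2 h) / (2 * l1 * phi_par l1 l2 h ^+ 2).

(* Main.v *)
Require Import Defs.
From HB Require Import structures.
From mathcomp Require Import all_boot all_order all_algebra.
From mathcomp Require Import all_classical all_reals all_analysis.
Import Order.TTheory GRing.Theory Num.Theory.
Local Open Scope ring_scope.
From mathcomp Require Import ring lra.
Import numFieldNormedType.Exports.

Set Implicit Arguments. Unset Strict Implicit.
Section S.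
Variable R : realType.
Lemma is_derive_expM (a t : R) : is_derive t 1 (fun s : R => expR (a * s)) (a * expR (a * t)).
Proof.
have H1 : is_derive t (1:R) (fun s : R => a * s) a.
  have := is_deriveZ a (is_derive_id t (1:R)).
  by rewrite /GRing.scale /= mulr1.
have := is_derive1_comp (is_derive_expR (a * t)) H1.
by rewrite mulrC.
Qed.
Variable A : 'M[R]_3.
Variable x : R -> 'cV[R]_3.
Hypothesis Hx : forall t : R, derivable x t 1 /\ 'D_1 x t = A *m x t.

Lemma dx (j : 'I_3) t : is_derive t (1:R) (fun s => x s j 0) ((A *m x t) j 0).
Proof.
have [d e] := Hx t.
apply: DeriveDef; first by move/derivable_mxP: d; apply.
by rewrite -e derive_mx // mxE.
Qed.

Lemma dcomp (p : {poly R}) (i : 'I_3) t :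
  is_derive t (1:R) (fun s => (horner_mx A p *m x s) i 0)
    ((horner_mx A (p * 'X) *m x t) i 0).
Proof.
set B := horner_mx A p.
have -> : (fun s => (B *m x s) i 0) = \sum_(j < 3) (fun s => B i j * x s j 0).
  by rewrite fct_sumE; apply/funext => s; rewrite mxE.
have H j : is_derive t (1:R) (fun s => B i j * x s j 0) (B i j * (A *m x t) j 0).
  exact: (is_deriveZ (B i j) (dx j t)).
apply: is_derive_eq (is_derive_sum H) _.
rewrite rmorphM /= horner_mx_X -/B -mulmxE -mulmxA [RHS]mxE.
by apply: eq_bigr => j _.
Qed.

Lemma cst_der (f df : R -> R) : (forall u, is_derive u (1:R) f (df u)) ->
  (forall u, df u = 0) -> forall s t, f t = f s.
Proof.
move=> H0 H1 s t; apply: is_derive_0_is_cst => u.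
by apply: is_derive_eq (H0 u) _.
Qed.

Lemma hX (p : {poly R}) (l : R) (v : 'cV[R]_3) :
  horner_mx A (p * 'X) *m v =
  horner_mx A (p * ('X - l%:P)) *m v + l *: (horner_mx A p *m v).
Proof.
have -> : p * 'X = p * ('X - l%:P) + l%:P * p by ring.
by rewrite rmorphD !rmorphM /= (horner_mx_C A) mulmxDl scalemxAl -mul_scalar_mx.
Qed.

Lemma exp_sol (p : {poly R}) (l : R) s t :
  horner_mx A (p * ('X - l%:P)) = 0 ->
  horner_mx A p *m x t = expR (l * (t - s)) *: (horner_mx A p *m x s).
Proof.
move=> H; apply/matrixP => i j; rewrite ord1 [RHS]mxE.
set y := fun u => (horner_mx A p *m x u) i 0.
have D u : is_derive u (1:R) (fun v => expR (- l * v) * y v)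
   (expR (- l * u) * ((horner_mx A (p * 'X) *m x u) i 0) + y u * (- l * expR (- l * u))).
  exact: is_deriveM (is_derive_expM _ _) (dcomp p i u).
have := cst_der D _ s t.
rewrite /= -/(y t) -/(y s) => E.
have {}E : expR (- l * t) * y t = expR (- l * s) * y s.
  apply: E => u; rewrite (@hX p l) H mul0mx add0r mxE -/(y u); ring.
have -> : y t = expR (l * t) * (expR (- l * t) * y t).
  by rewrite mulrA -expRD mulNr subrr expR0 mul1r.
by rewrite E mulrA -expRD; congr (expR _ * _); ring.
Qed.

Lemma exp_sol2 (p : {poly R}) (l : R) s t :
  horner_mx A (p * ('X - l%:P) ^+ 2) = 0 ->
  horner_mx A p *m x t = expR (l * (t - s)) *: (horner_mx A p *m x s
     + (t - s) *: (horner_mx A (p * ('X - l%:P)) *m x s)).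
Proof.
move=> H; apply/matrixP => i j; rewrite ord1 [RHS]mxE.
set y := fun u => (horner_mx A p *m x u) i 0.
set z := fun u => (horner_mx A (p * ('X - l%:P)) *m x u) i 0.
have Z u : z u = expR (l * (u - s)) * z s.
  rewrite /z (@exp_sol (p * ('X - l%:P)) l s u) ?mxE //.
  by rewrite -mulrA -expr2.
have D u : is_derive u (1:R) (fun v => expR (- l * v) * y v - v * (expR (- l * s) * z s))
   (expR (- l * u) * ((horner_mx A (p * 'X) *m x u) i 0) + y u * (- l * expR (- l * u))
    - (u *: 0 + (expR (- l * s) * z s) *: 1)).
  apply: is_deriveB; first exact: is_deriveM (is_derive_expM _ _) (dcomp p i u).
  apply: is_deriveM.
have := cst_der D _ s t.
rewrite /= -/(y t) -/(y s) => E.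
have {}E : expR (- l * t) * y t - t * (expR (- l * s) * z s)
   = expR (- l * s) * y s - s * (expR (- l * s) * z s).
  apply: E => u; rewrite (@hX p l) mxE -/(y u) -/(z u) Z mxE -/(y u).
  have K : expR (- l * u) * expR (l * (u - s)) = expR (- l * s).
    by rewrite -expRD; congr expR; ring.
  rewrite mulrDr mulrA K scaler0 add0r.
  have -> : (expR (- l * s) * z s)%:A = expR (- l * s) * z s.
    by rewrite /GRing.scale /= mulr1.
  ring.
have -> : y t = expR (l * t) * (expR (- l * t) * y t).
  by rewrite mulrA -expRD mulNr subrr expR0 mul1r.
have -> : expR (- l * t) * y t = expR (- l * s) * (y s + (t - s) * z s).
  move: E; set a := expR (- l * s) => E. 
  apply: (subIr (t * (a * z s))); rewrite E; ring.
rewrite mulrA -expRD !mxE -/(y s) -/(z s).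
by congr (expR _ * _); [ring | rewrite /y /z !mxE].
Qed.

Definition L u (p : {poly R}) := horner_mx A p *m x u.

Lemma LD u p q : L u p + L u q = L u (p + q).
Proof. by rewrite /L rmorphD mulmxDl. Qed.
Lemma LB u p q : L u p - L u q = L u (p - q).
Proof. by rewrite /L rmorphB mulmxBl. Qed.
Lemma LZ u a p : a *: L u p = L u (a%:P * p).
Proof. by rewrite /L rmorphM /= (horner_mx_C A) scalemxAl -mul_scalar_mx. Qed.
Lemma LM u N p : horner_mx A N *m L u p = L u (N * p).
Proof. by rewrite /L rmorphM mulmxA. Qed.
Lemma L1 u : x u = L u 1.
Proof. by rewrite /L rmorph1 mul1mx. Qed.

Lemma step (l1 l2 h c0 c1 c2 s : R) :
  l1 != l2 ->
  horner_mx A (('X - l1%:P) ^+ 2 * ('X - l2%:P)) = 0 ->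
  (l1 - l2) ^+ 2 * c0 = l1 ^+ 2 * expR (l2 * h) - expR (l1 * h) * (2 * l1 * l2 - l2 ^+ 2)
      - expR (l1 * h) * h * (l2 - l1) * l1 * l2 ->
  (l1 - l2) ^+ 2 * c1 = - 2 * l1 * expR (l2 * h) + 2 * l1 * expR (l1 * h)
      + expR (l1 * h) * h * (l2 - l1) * (l1 + l2) ->
  (l1 - l2) ^+ 2 * c2 = expR (l2 * h) - expR (l1 * h) - expR (l1 * h) * h * (l2 - l1) ->
  x (s + h) = L s (c0%:P + c1%:P * 'X + c2%:P * 'X ^+ 2).
Proof.
move=> n12 Hq H0 H1 H2.
have V1 := @exp_sol (('X - l1%:P) ^+ 2) l2 s (s + h) Hq.
have V3 := @exp_sol2 ('X - l2%:P) l1 s (s + h) (etrans (congr1 _ (mulrC _ _)) Hq).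
have E : s + h - s = h by ring.
rewrite E in V1 V3.
have nz : (l1 - l2) ^+ 2 != 0 by rewrite expf_neq0 // subr_eq0.
apply: (scalerI nz).
rewrite L1 LZ.
have -> : ((l1 - l2) ^+ 2)%:P * 1 = ('X - l1%:P) ^+ 2 - ('X - (2 * l1 - l2)%:P) * ('X - l2%:P) by ring.
rewrite -LB -[L _ (_ * (_ - l2%:P))]LM.
rewrite /L V1 V3 -/(L _ _).
rewrite -/(L s ('X - l2%:P)) -/(L s (('X - l2%:P) * ('X - l1%:P))) -/(L s (c0%:P + c1%:P * 'X + c2%:P * 'X ^+ 2)).
rewrite !LZ LD LZ LM LB.
set k := - (expR (l1 * h) * h).
have Hk : L s (k%:P * (('X - l1%:P) ^+ 2 * ('X - l2%:P))) = 0.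
  by rewrite -LZ /L Hq mul0mx scaler0.
rewrite -[RHS]addr0 -Hk LD; congr (L s _).
have -> : ((l1 - l2) ^+ 2)%:P * (c0%:P + c1%:P * 'X + c2%:P * 'X ^+ 2) = 
  ((l1 - l2) ^+ 2 * c0)%:P + ((l1 - l2) ^+ 2 * c1)%:P * 'X + ((l1 - l2) ^+ 2 * c2)%:P * 'X ^+ 2 by ring.
rewrite H0 H1 H2 /k; ring.
Qed.
End S.


Lemma hornerP (R : realType) (A : 'M[R]_3) a b c (v : 'cV[R]_3) :
  horner_mx A (a%:P + b%:P * 'X + c%:P * 'X ^+ 2) *m v
  = a *: v + b *: (A *m v) + c *: (A ^+ 2 *m v).
Proof.
rewrite !rmorphD !rmorphM /= !(horner_mx_C A) horner_mx_X expr2.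
by rewrite !mulmxDl -!mulmxA !mul_scalar_mx.
Qed.

Unset Implicit Arguments.

Theorem mainTheorem13 (R : realType) (A : 'M[R]_3) (l1 l2 h : R) :
  0 < h -> l1 != l2 ->
  char_poly A = ('X - l1%:P) ^+ 2 * ('X - l2%:P) ->
  phi_par l1 l2 h != 0 ->
  scheme_exact A h (psi_par l1 l2 h) (phi_par l1 l2 h) (theta_par l1 l2 h).
Proof.
move=> h0 n12 Hchar phi0 x0 xs Hxs0 Hrec x [Hx0 Hx] k.
have Hq : horner_mx A (('X - l1%:P) ^+ 2 * ('X - l2%:P)) = 0.
  by rewrite -Hchar Cayley_Hamilton.
have hn0 : h != 0 by rewrite gt_eqF.
set e1 := expR (l1 * h); set e2 := expR (l2 * h).
set c0 := psi_par l1 l2 h; set c1 := phi_par l1 l2 h.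
set c2 := c1 * (theta_par l1 l2 h * c1).
have [F0 F1 F2] : [/\ (l1 - l2) ^+ 2 * c0 = l1 ^+ 2 * e2 - e1 * (2 * l1 * l2 - l2 ^+ 2)
      - e1 * h * (l2 - l1) * l1 * l2,
   (l1 - l2) ^+ 2 * c1 = - 2 * l1 * e2 + 2 * l1 * e1 + e1 * h * (l2 - l1) * (l1 + l2) &
   (l1 - l2) ^+ 2 * c2 = e2 - e1 - e1 * h * (l2 - l1)].
  have n12' : l1 - l2 != 0 by rewrite subr_eq0.
  case: (eqVneq l1 0) => [l10 | l1n0].
    have l2n0 : l2 != 0 by rewrite eq_sym -l10.
    move: phi0; rewrite /c2 /c1 /c0 /e1 /psi_par /phi_par /theta_par l10 eqxx mul0r expR0 => _.
    rewrite -/e2; split; [ring | ring | field].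
    by rewrite l2n0 hn0.
  have Ec1 : c1 = ((l2 ^+ 2 * h - l1 ^+ 2 * h + 2 * l1) * e1 - 2 * l1 * e2) / (l1 - l2) ^+ 2.
    by rewrite /c1 /phi_par (negbTE l1n0).
  have G1 : (l1 - l2) ^+ 2 * c1 = - 2 * l1 * e2 + 2 * l1 * e1 + e1 * h * (l2 - l1) * (l1 + l2).
    by rewrite Ec1; field.
  have Ec0 : c0 = ((2 - l1 * h) * e1 - l1 * c1) / 2.
    by rewrite /c0 /psi_par (negbTE l1n0).
  have Ec2 : c2 = (h * e1 - c1) / (2 * l1).
    rewrite /c2 /theta_par (negbTE l1n0) -/c1 -/e1; field.
    by rewrite l1n0 phi0.
  split => //.
    rewrite Ec0.
    have -> : (l1 - l2) ^+ 2 * (((2 - l1 * h) * e1 - l1 * c1) / 2) =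
      ((2 - l1 * h) * e1 * (l1 - l2) ^+ 2 - l1 * ((l1 - l2) ^+ 2 * c1)) / 2 by field.
    by rewrite G1; field.
  rewrite Ec2.
  have -> : (l1 - l2) ^+ 2 * ((h * e1 - c1) / (2 * l1)) =
      (h * e1 * (l1 - l2) ^+ 2 - (l1 - l2) ^+ 2 * c1) / (2 * l1) by field.
  by rewrite G1; field.
have Hstep s : x (s + h) = horner_mx A (c0%:P + c1%:P * 'X + c2%:P * 'X ^+ 2) *m x s.
  exact: (step Hx s n12 Hq F0 F1 F2).
have Hxs j : xs j.+1 = horner_mx A (c0%:P + c1%:P * 'X + c2%:P * 'X ^+ 2) *m xs j.
  have := congr1 (fun v => c1 *: v) (Hrec j).
  rewrite /= scalerA mulfV // scale1r => /eqP; rewrite subr_eq => /eqP ->.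
  rewrite hornerP scalerDr scalerA.
  by rewrite addrC addrA.
elim: k => [|k IH]; first by rewrite Hxs0 mul0r Hx0.
by rewrite Hxs IH -Hstep -[k.+1]addn1 natrD mulrDl mul1r.
Qed.
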